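(* Let $\Gamma$ be a finite multiset of formulas and $F$ a formula. Then $F\supset\bot,\Gamma\longrightarrow F$ has a $\mathbf{C}$-proof if and only if $\Gamma\longrightarrow F$ has a $\mathbf{C}$-proof.
   Context: Formulas are first-order formulas built from atomic formulas and the logical constants $\top$, $\bot$ (not counted as atomic) using $\land,\lor,\supset,\forall,\exists$; $B[t/x]$ is capture-avoiding substitution of term $t$ for free $x$ in $B$. A sequent $\Gamma\longrightarrow\Delta$ is a pair of finite multisets of formulas; $B,\Gamma$ denotes $\Gamma$ with an extra occurrence of $B$. A sequent is an axiom if $\top\in\Delta$ or some formula that is $\bot$ or atomic occurs in both $\Gamma$ and $\Delta$. Writing premises $\Rightarrow$ conclusion, the rules are all instances of: contr-L: $B,B,\Gamma\longrightarrow\Delta\Rightarrow B,\Gamma\longrightarrow\Delta$; contr-R: $\Gamma\longrightarrow\Delta,B,B\Rightarrow\Gamma\longrightarrow\Delta,B$; $\bot$-R: $\Gamma\longrightarrow\Delta,\bot\Rightarrow\Gamma\longrightarrow\Delta,D$; $\land$-L: $B,\Gamma\longrightarrow\Delta\Rightarrow B\land D,\Gamma\longrightarrow\Delta$ and $D,\Gamma\longrightarrow\Delta\Rightarrow B\land D,\Gamma\longrightarrow\Delta$; $\lor$-L: $B,\Gamma\longrightarrow\Delta$ and $D,\Gamma\longrightarrow\Delta\Rightarrow B\lor D,\Gamma\longrightarrow\Delta$; $\land$-R: $\Gamma\longrightarrow\Delta,B$ and $\Gamma\longrightarrow\Delta,D\Rightarrow\Gamma\longrightarrow\Delta,B\land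 D$; $\lor$-R: $\Gamma\longrightarrow\Delta,B\Rightarrow\Gamma\longrightarrow\Delta,B\lor D$ and $\Gamma\longrightarrow\Delta,D\Rightarrow\Gamma\longrightarrow\Delta,B\lor D$; $\supset$-L: $\Gamma\longrightarrow\Delta,B$ and $D,\Gamma\longrightarrow\Theta\Rightarrow B\supset D,\Gamma\longrightarrow\Delta,\Theta$; $\supset$-R: $B,\Gamma\longrightarrow\Delta,D\Rightarrow\Gamma\longrightarrow\Delta,B\supset D$; $\forall$-L: $B[t/x],\Gamma\longrightarrow\Delta\Rightarrow\forall x B,\Gamma\longrightarrow\Delta$; $\exists$-R: $\Gamma\longrightarrow\Delta,B[t/x]\Rightarrow\Gamma\longrightarrow\Delta,\exists x B$ ($t$ any term); $\exists$-L: $B[c/x],\Gamma\longrightarrow\Delta\Rightarrow\exists x B,\Gamma\longrightarrow\Delta$; $\forall$-R: $\Gamma\longrightarrow\Delta,B[c/x]\Rightarrow\Gamma\longrightarrow\Delta,\forall x B$, where the constant $c$ does not occur in the conclusion. A $\mathbf{C}$-proof (classical) is a finite tree of sequents with axioms at the leaves, each internal node being the conclusion of a rule instance whose premises are its children. *)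

(* Defs.v *)
From Stdlib Require Import List Permutation PeanoNat.
Import ListNotations.

(* Terms: named free variables, de Bruijn bound variables, constants,
   and function symbols applied to argument lists. *)
Inductive term : Type :=
| TVar : nat -> term
| TBnd : nat -> term
| TCon : nat -> term
| TFun : nat -> list term -> term.

Inductive formula : Type :=
| Atom : nat -> list term -> formula
| Top : formula
| Bot : formula
| And : formula -> formula -> formula
| Or  : formula -> formula -> formula
| Imp : formula -> formula -> formula
| All : formula -> formula      (* body uses bound index 0 *)
| Ex  : formula -> formula.

(* replace bound index k by t (t is required to be closed when used) *)
Fixpoint topen (k : nat) (t u : term) : term :=
  match u with
  | TBnd i => if Nat.eqb i k then t else TBnd i
  | TFun f l => TFun f (map (topen k t) l)
  | _ => u
  end.

Fixpoint fopen (k : nat) (t : term) (A : formula) : formula :=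
  match A with
  | Atom p l => Atom p (map (topen k t) l)
  | Top => Top
  | Bot => Bot
  | And B D => And (fopen k t B) (fopen k t D)
  | Or B D => Or (fopen k t B) (fopen k t D)
  | Imp B D => Imp (fopen k t B) (fopen k t D)
  | All B => All (fopen (S k) t B)
  | Ex B => Ex (fopen (S k) t B)
  end.

(* B[t/x] for the quantified formula Qx B (body B) *)
Definition inst (B : formula) (t : term) : formula := fopen 0 t B.

Fixpoint tlc (k : nat) (u : term) : bool :=
  match u with
  | TBnd i => Nat.ltb i k
  | TFun _ l => forallb (tlc k) l
  | _ => true
  end.

Fixpoint flc (k : nat) (A : formula) : bool :=
  match A with
  | Atom _ l => forallb (tlc k) l
  | Top | Bot => true
  | And B D | Or B D | Imp B D => flc k B && flc k D
  | All B | Ex B => flc (S k) B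
  end.

Definition wf_formula (A : formula) : Prop := flc 0 A = true.
Definition closed_term (t : term) : Prop := tlc 0 t = true.

Fixpoint tcon_occ (c : nat) (u : term) : bool :=
  match u with
  | TCon d => Nat.eqb c d
  | TFun _ l => existsb (tcon_occ c) l
  | _ => false
  end.

Fixpoint fcon_occ (c : nat) (A : formula) : bool :=
  match A with
  | Atom _ l => existsb (tcon_occ c) l
  | Top | Bot => false
  | And B D | Or B D | Imp B D => fcon_occ c B || fcon_occ c D
  | All B | Ex B => fcon_occ c B
  end.

(* Sequents: pairs of finite multisets, represented by lists up to permutation *)
Definition sequent : Type := (list formula * list formula)%type.

Definition seq_eq (s1 s2 : sequent) : Prop :=
  Permutation (fst s1) (fst s2) /\ Permutation (snd s1) (snd s2).

Definition con_in_seq (c : nat) (s : sequent) : Prop :=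
  exists A, In A (fst s ++ snd s) /\ fcon_occ c A = true.

Definition is_atomic (A : formula) : Prop := exists p l, A = Atom p l.

Definition axiom (s : sequent) : Prop :=
  In Top (snd s) \/
  exists A, (A = Bot \/ is_atomic A) /\ In A (fst s) /\ In A (snd s).

(* rule instances: premises => conclusion (principal formulas written at the
   head; multiset reading is recovered by seq_eq in Cproof) *)
Inductive rule : list sequent -> sequent -> Prop :=
| r_contrL B G D : rule [(B :: B :: G, D)] (B :: G, D)
| r_contrR B G D : rule [(G, B :: B :: D)] (G, B :: D)
| r_botR X G D : rule [(G, Bot :: D)] (G, X :: D)
| r_andL1 B X G D : rule [(B :: G, D)] (And B X :: G, D)
| r_andL2 B X G D : rule [(X :: G, D)] (And B X :: G, D)
| r_orL B X G D : rule [(B :: G, D); (X :: G, D)] (Or B X :: G, D)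
| r_andR B X G D : rule [(G, B :: D); (G, X :: D)] (G, And B X :: D)
| r_orR1 B X G D : rule [(G, B :: D)] (G, Or B X :: D)
| r_orR2 B X G D : rule [(G, X :: D)] (G, Or B X :: D)
| r_impL B X G D T : rule [(G, B :: D); (X :: G, T)] (Imp B X :: G, D ++ T)
| r_impR B X G D : rule [(B :: G, X :: D)] (G, Imp B X :: D)
| r_allL B t G D : closed_term t ->
    rule [(inst B t :: G, D)] (All B :: G, D)
| r_exR B t G D : closed_term t ->
    rule [(G, inst B t :: D)] (G, Ex B :: D)
| r_exL B c G D : ~ con_in_seq c (Ex B :: G, D) ->
    rule [(inst B (TCon c) :: G, D)] (Ex B :: G, D)
| r_allR B c G D : ~ con_in_seq c (G, All B :: D) ->
    rule [(G, inst B (TCon c) :: D)] (G, All B :: D).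

Inductive Cproof : sequent -> Prop :=
| cp_ax s : axiom s -> Cproof s
| cp_rule prems concl s :
    rule prems concl -> seq_eq concl s ->
    (forall p, In p prems -> Cproof p) -> Cproof s.

(* Main.v *)
Require Import Defs.
From Stdlib Require Import List Permutation PeanoNat Lia.
Import ListNotations.

Fixpoint term_ind' (P : term -> Prop)
  (H1 : forall n, P (TVar n)) (H2 : forall n, P (TBnd n)) (H3 : forall n, P (TCon n))
  (H4 : forall f l, Forall P l -> P (TFun f l)) (u : term) : P u :=
  match u with
  | TVar n => H1 n | TBnd n => H2 n | TCon n => H3 n
  | TFun f l => H4 f l ((fix go (l : list term) : Forall P l :=
       match l with [] => Forall_nil _ | x :: r => Forall_cons _ (term_ind' P H1 H2 H3 H4 x) (go r) end) l)
  end.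

Fixpoint trn (s : nat -> nat) (u : term) : term :=
  match u with
  | TCon c => TCon (s c)
  | TFun f l => TFun f (map (trn s) l)
  | _ => u
  end.

Fixpoint frn (s : nat -> nat) (A : formula) : formula :=
  match A with
  | Atom p l => Atom p (map (trn s) l)
  | Top => Top | Bot => Bot
  | And B D => And (frn s B) (frn s D)
  | Or B D => Or (frn s B) (frn s D)
  | Imp B D => Imp (frn s B) (frn s D)
  | All B => All (frn s B)
  | Ex B => Ex (frn s B)
  end.

Lemma trn_topen s k t u : trn s (topen k t u) = topen k (trn s t) (trn s u).
Proof.
  induction u using term_ind'; simpl; auto.
  - destruct (Nat.eqb n k); reflexivity.
  - f_equal. rewrite !map_map. apply map_ext_Forall.
    eapply Forall_impl; [|exact H]. intros a Ha. simpl in Ha. exact Ha.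
Qed.

Lemma frn_fopen s A : forall k t, frn s (fopen k t A) = fopen k (trn s t) (frn s A).
Proof.
  induction A; intros k t; simpl; try (f_equal; auto; fail).
  f_equal. rewrite !map_map. apply map_ext. intros; apply trn_topen.
Qed.

Lemma tlc_trn s k u : tlc k (trn s u) = tlc k u.
Proof.
  induction u using term_ind'; simpl; auto.
  induction H; simpl; auto. rewrite H, IHForall. reflexivity.
Qed.

Lemma trn_occ s y u : tcon_occ y u = true -> tcon_occ (s y) (trn s u) = true.
Proof.
  induction u using term_ind'; simpl; try discriminate.
  - intros H. apply Nat.eqb_eq in H. subst. apply Nat.eqb_refl.
  - induction H; simpl; try discriminate.
    intros Hx. apply Bool.orb_true_iff in Hx. apply Bool.orb_true_iff.
    destruct Hx; auto.
Qed.

Lemma frn_occ s y A : fcon_occ y A = true -> fcon_occ (s y) (frn s A) = true.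
Proof.
  induction A; simpl; try discriminate; try (intros Hx; apply Bool.orb_true_iff in Hx;
    apply Bool.orb_true_iff; destruct Hx; auto; fail); auto.
  induction l; simpl; try discriminate.
  intros Hx. apply Bool.orb_true_iff in Hx. apply Bool.orb_true_iff.
  destruct Hx; auto using trn_occ.
Qed.

Lemma trn_ext s1 s2 u : (forall y, tcon_occ y u = true -> s1 y = s2 y) -> trn s1 u = trn s2 u.
Proof.
  induction u using term_ind'; simpl; intros Hy; auto.
  - rewrite (Hy n); auto. apply Nat.eqb_refl.
  - f_equal. induction H; simpl; auto. simpl in Hy. f_equal.
    + apply H. intros y Hy'. apply Hy. rewrite Hy'. reflexivity.
    + apply IHForall. intros y Hy'. apply Hy. rewrite Hy'. apply Bool.orb_true_r.
Qed.

Lemma frn_ext s1 s2 A : (forall y, fcon_occ y A = true -> s1 y = s2 y) -> frn s1 A = frn s2 A.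
Proof.
  induction A; simpl; intros Hy; auto;
   try (f_equal; [apply IHA1|apply IHA2]; intros y Hy'; apply Hy; rewrite Hy';
        auto using Bool.orb_true_r; fail);
   try (f_equal; apply IHA; auto; fail).
  f_equal. induction l; simpl; auto. simpl in Hy. f_equal.
  + apply trn_ext. intros y Hy'. apply Hy. rewrite Hy'. reflexivity.
  + apply IHl. intros y Hy'. apply Hy. rewrite Hy'. apply Bool.orb_true_r.
Qed.

Lemma trn_id u : trn (fun x => x) u = u.
Proof.
  induction u using term_ind'; simpl; auto. f_equal.
  induction H; simpl; auto. rewrite H, IHForall. reflexivity.
Qed.

Lemma frn_id A : frn (fun x => x) A = A.
Proof.
  induction A; simpl; f_equal; auto.
  induction l; simpl; auto. rewrite trn_id, IHl. reflexivity.
Qed.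

Lemma tfresh u : exists n, forall d, n <= d -> tcon_occ d u = false.
Proof.
  induction u using term_ind'; simpl.
  - exists 0; auto.
  - exists 0; auto.
  - exists (S n). intros d Hd. apply Nat.eqb_neq. lia.
  - induction H; simpl.
    + exists 0; auto.
    + destruct H as [n1 H1]. destruct IHForall as [n2 H2].
      exists (max n1 n2). intros d Hd. rewrite H1, H2; auto; lia.
Qed.

Lemma ffresh A : exists n, forall d, n <= d -> fcon_occ d A = false.
Proof.
  induction A; simpl;
   try (destruct IHA1 as [n1 H1]; destruct IHA2 as [n2 H2];
        exists (max n1 n2); intros d Hd; rewrite H1, H2; auto; lia);
   try (exists 0; auto; fail); auto.
  induction l; simpl.
  - exists 0; auto.
  - destruct (tfresh a) as [n1 H1]. destruct IHl as [n2 H2].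
    exists (max n1 n2). intros d Hd. rewrite H1, H2; auto; lia.
Qed.

Lemma lfresh L : exists d, forall A, In A L -> fcon_occ d A = false.
Proof.
  assert (H : exists n, forall d, n <= d -> forall A, In A L -> fcon_occ d A = false).
  { induction L; simpl.
    - exists 0. intros d _ A [].
    - destruct (ffresh a) as [n1 H1]. destruct IHL as [n2 H2].
      exists (max n1 n2). intros d Hd A [<-|HA]; [apply H1|apply H2]; auto; lia. }
  destruct H as [n H]. exists n. apply H. lia.
Qed.

Definition inj (s : nat -> nat) := forall x y, s x = s y -> x = y.
Definition swap (a d x : nat) := if Nat.eqb x a then d else if Nat.eqb x d then a else x.

Lemma swap_inj a d : inj (swap a d).
Proof.
  intros x y. unfold swap.
  destruct (Nat.eqb_spec x a), (Nat.eqb_spec y a), (Nat.eqb_spec x d), (Nat.eqb_spec y d); lia.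
Qed.

Lemma Cproof_seq s s' : Cproof s -> seq_eq s s' -> Cproof s'.
Proof.
  intros H [H1 H2]. destruct H as [s Hax|prems concl s Hr [Hc1 Hc2] Hp].
  - apply cp_ax. destruct Hax as [Ht|[A [HA [HA1 HA2]]]].
    + left. eapply Permutation_in; eauto.
    + right. exists A. split; auto. split; eapply Permutation_in; eauto.
  - eapply cp_rule; eauto. split; eapply Permutation_trans; eauto.
Qed.

Lemma Cproof_perm G D G' D' : Cproof (G, D) -> Permutation G G' -> Permutation D D' -> Cproof (G', D').
Proof. intros H H1 H2. eapply Cproof_seq; eauto. split; auto. Qed.

Lemma one_prem p c : rule [p] c -> Cproof p -> Cproof c.
Proof.
  intros Hr Hp. eapply cp_rule; eauto. split; apply Permutation_refl.
  intros q [<-|[]]; auto.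
Qed.

Lemma two_prem p q c : rule [p; q] c -> Cproof p -> Cproof q -> Cproof c.
Proof.
  intros Hr Hp Hq. eapply cp_rule; eauto. split; apply Permutation_refl.
  intros x [<-|[<-|[]]]; auto.
Qed.

Lemma contrL_in P G D : In P G -> Cproof (P :: G, D) -> Cproof (G, D).
Proof.
  intros HP H. apply in_split in HP as [G1 [G2 ->]].
  assert (H' : Cproof (P :: P :: (G1 ++ G2), D)).
  { eapply Cproof_perm; eauto. apply perm_skip. apply Permutation_sym, Permutation_middle. }
  apply (one_prem _ _ (r_contrL P (G1 ++ G2) D)) in H'.
  eapply Cproof_perm; eauto. apply Permutation_middle.
Qed.

Lemma contrR_F G F D : Cproof (G, F :: F :: D) -> Cproof (G, F :: D).
Proof. intros H. eapply one_prem; [apply r_contrR|exact H]. Qed.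

Lemma incl_perm {A} (l l' m : list A) : Permutation l l' -> incl l' m -> incl l m.
Proof. intros Hp Hi x Hx. apply Hi. eapply Permutation_in; eauto. Qed.

Lemma nocon c G D : ~ con_in_seq c (G, D) -> forall A, In A (G ++ D) -> fcon_occ c A = false.
Proof.
  intros H A HA. destruct (fcon_occ c A) eqn:E; auto. exfalso. apply H. exists A. auto.
Qed.

Section Master.
Variable F : formula.

Lemma master s : Cproof s -> forall sg, inj sg -> forall G0 E,
  incl (map (frn sg) (fst s)) (Imp F Bot :: G0) ->
  Cproof (G0, map (frn sg) (snd s) ++ F :: E).
Proof.
  induction 1 as [s Hax|prems concl s Hr Hse Hp IH]; intros sg Hsg G0 E Hinc.
  - apply cp_ax. destruct s as [G D]; simpl in *.
    destruct Hax as [Ht|[A [HA [HA1 HA2]]]].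
    + left. apply in_or_app. left. change Top with (frn sg Top). apply in_map; auto.
    + right. exists (frn sg A). split.
      { destruct HA as [->|[p [l ->]]]; [left; reflexivity|right; eexists; eexists; reflexivity]. }
      split.
      * destruct (Hinc (frn sg A) (in_map _ _ _ HA1)) as [Heq|]; auto.
        exfalso. destruct HA as [->|[p [l ->]]]; discriminate.
      * apply in_or_app. left. apply in_map; auto.
  - destruct Hse as [Hs1 Hs2].
    apply (incl_perm _ _ _ (Permutation_map (frn sg) Hs1)) in Hinc.
    apply (fun H => Cproof_perm _ _ _ _ H (Permutation_refl G0)
             (Permutation_app_tail _ (Permutation_map (frn sg) Hs2))).
    clear Hs1 Hs2 s.
    assert (IH1 : forall p, In p prems -> forall sg, inj sg -> forall G0 E,
      incl (map (frn sg) (fst p)) (Imp F Bot :: G0) ->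
      Cproof (G0, map (frn sg) (snd p) ++ F :: E)) by exact IH.
    clear IH Hp.
    assert (Hsub : forall B G, incl (map (frn sg) (B :: G)) (Imp F Bot :: G0) ->
               forall C, incl (map (frn sg) (C :: G)) (Imp F Bot :: frn sg C :: G0)).
    { intros B G Hi C x [<-|Hx]; [right; left; reflexivity|].
      destruct (Hi x (or_intror Hx)) as [<-|Hx']; [left; reflexivity|right; right; auto]. }
    assert (Hprin : forall B G, incl (map (frn sg) (B :: G)) (Imp F Bot :: G0) ->
               Imp F Bot <> frn sg B -> In (frn sg B) G0).
    { intros B G Hi Hne. destruct (Hi (frn sg B) (or_introl eq_refl)); auto. congruence. }
    destruct Hr; simpl in *.
    +
      apply (IH1 _ (or_introl eq_refl)); auto. simpl.
      intros x [<-|[<-|Hx]]; apply Hinc; simpl; auto.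
    + apply contrR_F. apply (IH1 _ (or_introl eq_refl) sg Hsg G0 E); auto.
    + eapply one_prem; [apply (r_botR (frn sg X))|].
      apply (IH1 _ (or_introl eq_refl) sg Hsg G0 E); auto.
    + apply (contrL_in (frn sg (And B X))). { apply (Hprin (And B X) G Hinc). discriminate. }
      simpl. eapply one_prem; [apply r_andL1|].
      apply (IH1 _ (or_introl eq_refl) sg Hsg _ E). apply (Hsub (And B X) G Hinc).
    + apply (contrL_in (frn sg (And B X))). { apply (Hprin (And B X) G Hinc). discriminate. }
      simpl. eapply one_prem; [apply r_andL2|].
      apply (IH1 _ (or_introl eq_refl) sg Hsg _ E). apply (Hsub (And B X) G Hinc).
    + apply (contrL_in (frn sg (Or B X))). { apply (Hprin (Or B X) G Hinc). discriminate. }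
      simpl. eapply two_prem; [apply r_orL| |].
      * apply (IH1 _ (or_introl eq_refl) sg Hsg _ E). apply (Hsub (Or B X) G Hinc).
      * apply (IH1 _ (or_intror (or_introl eq_refl)) sg Hsg _ E). apply (Hsub (Or B X) G Hinc).
    + eapply two_prem; [apply r_andR| |].
      * apply (IH1 _ (or_introl eq_refl) sg Hsg _ E); auto.
      * apply (IH1 _ (or_intror (or_introl eq_refl)) sg Hsg _ E); auto.
    + eapply one_prem; [apply r_orR1|]. apply (IH1 _ (or_introl eq_refl) sg Hsg _ E); auto.
    + eapply one_prem; [apply r_orR2|]. apply (IH1 _ (or_introl eq_refl) sg Hsg _ E); auto.
    +
      destruct (Hinc (Imp (frn sg B) (frn sg X)) (or_introl eq_refl)) as [Heq|Hin].
      * injection Heq as HF HX.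
        pose proof (IH1 _ (or_introl eq_refl) sg Hsg G0 (map (frn sg) T ++ E)) as H1.
        simpl in H1. rewrite <- HF in H1.
        assert (H2 : Cproof (G0, F :: F :: (map (frn sg) D ++ map (frn sg) T ++ E))).
        { eapply Cproof_perm; [apply H1; intros x Hx; apply Hinc; simpl; auto|apply Permutation_refl|].
          apply perm_skip. apply Permutation_sym, Permutation_middle. }
        apply contrR_F in H2. eapply Cproof_perm; [exact H2|apply Permutation_refl|].
        rewrite map_app, !app_assoc. apply (Permutation_middle (map (frn sg) D ++ map (frn sg) T)).
      * apply (contrL_in _ _ _ Hin).
        pose proof (IH1 _ (or_introl eq_refl) sg Hsg G0 []) as H1. simpl in H1.
        pose proof (IH1 _ (or_intror (or_introl eq_refl)) sg Hsg (frn sg X :: G0) E) as H2.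
        simpl in H2.
        assert (H3 := two_prem _ _ _ (r_impL (frn sg B) (frn sg X) G0 (map (frn sg) D ++ [F])
                     (map (frn sg) T ++ F :: E)) (H1 ltac:(intros x Hx; apply Hinc; simpl; auto))
                     (H2 (Hsub (Imp B X) G Hinc X))).
        assert (H4 : Cproof (Imp (frn sg B) (frn sg X) :: G0,
                     F :: F :: (map (frn sg) D ++ map (frn sg) T ++ E))).
        { eapply Cproof_perm; [exact H3|apply Permutation_refl|].
          rewrite <- app_assoc. simpl.
          eapply Permutation_trans; [apply Permutation_sym, Permutation_middle|]. apply perm_skip.
          rewrite app_assoc.
          eapply Permutation_trans; [apply Permutation_sym, Permutation_middle|]. apply perm_skip.
          rewrite app_assoc. apply Permutation_refl. }
        apply contrR_F in H4. eapply Cproof_perm; [exact H4|apply Permutation_refl|].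
        rewrite map_app, !app_assoc. apply (Permutation_middle (map (frn sg) D ++ map (frn sg) T)).
    +
      eapply one_prem; [apply r_impR|].
      apply (IH1 _ (or_introl eq_refl) sg Hsg _ E). simpl.
      intros x [<-|Hx]; [right; left; reflexivity|].
      destruct (Hinc x Hx) as [<-|Hx']; [left; reflexivity|right; right; auto].
    +
      apply (contrL_in (frn sg (All B))). { apply (Hprin (All B) G Hinc). discriminate. }
      simpl. eapply one_prem; [apply (r_allL (frn sg B) (trn sg t))|].
      { unfold closed_term in *. rewrite tlc_trn. auto. }
      apply (IH1 _ (or_introl eq_refl) sg Hsg _ E).
      unfold inst. rewrite <- frn_fopen. apply (Hsub (All B) G Hinc).
    +
      eapply one_prem; [apply (r_exR (frn sg B) (trn sg t))|].
      { unfold closed_term in *. rewrite tlc_trn. auto. }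
      unfold inst. rewrite <- frn_fopen.
      apply (IH1 _ (or_introl eq_refl) sg Hsg _ E); auto.
    +
      pose proof (nocon _ _ _ H) as Hc. simpl in Hc.
      destruct (lfresh (G0 ++ F :: E ++ map (frn sg) (Ex B :: G) ++ map (frn sg) D)) as [d Hd].
      set (tau := fun x => swap (sg c) d (sg x)).
      assert (Htau : inj tau).
      { intros x y Hxy. apply Hsg. apply (swap_inj (sg c) d). exact Hxy. }
      assert (Hag : forall A, In A (Ex B :: G ++ D) -> frn tau A = frn sg A).
      { intros A HA. apply frn_ext. intros y Hy. unfold tau, swap.
        assert (Hyc : y <> c). { intros ->. rewrite Hc in Hy; auto. discriminate. }
        assert (Hd' : fcon_occ d (frn sg A) = false).
        { apply Hd. simpl in HA. rewrite in_app_iff in HA. simpl. rewrite !in_app_iff. simpl.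
          destruct HA as [<-|[HA|HA]]; simpl; rewrite ?in_app_iff; simpl; rewrite ?in_app_iff; simpl; eauto 10 using in_map, or_introl, or_intror. }
        destruct (Nat.eqb_spec (sg y) (sg c)) as [e|_]; [apply Hsg in e; congruence|].
        destruct (Nat.eqb_spec (sg y) d) as [e|_]; auto.
        apply (frn_occ sg) in Hy. rewrite e, Hd' in Hy. discriminate. }
      assert (HB : frn tau B = frn sg B).
      { assert (H1 := Hag (Ex B) (or_introl eq_refl)). simpl in H1. congruence. }
      assert (HG : map (frn tau) G = map (frn sg) G).
      { apply map_ext_in. intros A HA. apply Hag. right. apply in_or_app; auto. }
      assert (HD : map (frn tau) D = map (frn sg) D).
      { apply map_ext_in. intros A HA. apply Hag. right. apply in_or_app; auto. }
      assert (Htc : tau c = d). { unfold tau, swap. rewrite Nat.eqb_refl. reflexivity. }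
      pose proof (IH1 _ (or_introl eq_refl) tau Htau (inst (frn sg B) (TCon d) :: G0) E) as H1.
      simpl in H1. rewrite HD in H1.
      unfold inst in H1 at 1. rewrite frn_fopen, HB, HG in H1. simpl in H1. rewrite Htc in H1.
      apply (contrL_in (frn sg (Ex B))). { apply (Hprin (Ex B) G Hinc). discriminate. }
      simpl. eapply one_prem; [apply (r_exL (frn sg B) d)|].
      { intros [A [HA Hocc]]. rewrite Hd in Hocc; [discriminate|].
        repeat ((rewrite in_app_iff in HA) || (progress (simpl in HA))).
        repeat ((rewrite in_app_iff) || (progress simpl)).
        intuition auto. }
      apply H1. intros x [<-|Hx]; [right; left; reflexivity|].
      destruct (Hinc x (or_intror Hx)) as [<-|Hx']; [left; reflexivity|right; right; auto].
    +
      pose proof (nocon _ _ _ H) as Hc. simpl in Hc.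
      destruct (lfresh (G0 ++ F :: E ++ map (frn sg) G ++ map (frn sg) (All B :: D))) as [d Hd].
      set (tau := fun x => swap (sg c) d (sg x)).
      assert (Htau : inj tau).
      { intros x y Hxy. apply Hsg. apply (swap_inj (sg c) d). exact Hxy. }
      assert (Hag : forall A, In A (G ++ All B :: D) -> frn tau A = frn sg A).
      { intros A HA. apply frn_ext. intros y Hy. unfold tau, swap.
        assert (Hyc : y <> c). { intros ->. rewrite Hc in Hy; auto. discriminate. }
        assert (Hd' : fcon_occ d (frn sg A) = false).
        { apply Hd. rewrite in_app_iff in HA. simpl in HA. rewrite !in_app_iff. simpl. rewrite !in_app_iff.
          destruct HA as [HA|[<-|HA]]; simpl; rewrite ?in_app_iff; simpl; rewrite ?in_app_iff; simpl; eauto 10 using in_map, or_introl, or_intror. }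
        destruct (Nat.eqb_spec (sg y) (sg c)) as [e|_]; [apply Hsg in e; congruence|].
        destruct (Nat.eqb_spec (sg y) d) as [e|_]; auto.
        apply (frn_occ sg) in Hy. rewrite e, Hd' in Hy. discriminate. }
      assert (HB : frn tau B = frn sg B).
      { assert (H1 := Hag (All B) ltac:(apply in_or_app; right; left; reflexivity)).
        simpl in H1. congruence. }
      assert (HG : map (frn tau) G = map (frn sg) G).
      { apply map_ext_in. intros A HA. apply Hag. apply in_or_app; auto. }
      assert (HD : map (frn tau) D = map (frn sg) D).
      { apply map_ext_in. intros A HA. apply Hag. apply in_or_app; right; right; auto. }
      assert (Htc : tau c = d). { unfold tau, swap. rewrite Nat.eqb_refl. reflexivity. }
      pose proof (IH1 _ (or_introl eq_refl) tau Htau G0 E) as H1.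
      simpl in H1. rewrite HD, HG in H1.
      unfold inst in H1 at 1. rewrite frn_fopen, HB in H1. simpl in H1. rewrite Htc in H1.
      eapply one_prem; [apply (r_allR (frn sg B) d)|].
      { intros [A [HA Hocc]]. rewrite Hd in Hocc; [discriminate|].
        repeat ((rewrite in_app_iff in HA) || (progress (simpl in HA))).
        repeat ((rewrite in_app_iff) || (progress simpl)).
        intuition auto. }
      apply H1. exact Hinc.
Qed.

End Master.

Theorem lemma3 (G : list formula) (F : formula) :
  (forall A, In A G -> wf_formula A) -> wf_formula F ->
  (Cproof (Imp F Bot :: G, [F]) <-> Cproof (G, [F])).
Proof.
  intros _ _. split.
  - intros H. pose proof (master F _ H (fun x => x) ltac:(intros x y e; exact e) G []) as H1.
    simpl in H1. rewrite frn_id in H1. apply contrR_F. apply H1.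
    intros x [<-|Hx]; [left; reflexivity|]. rewrite map_ext with (g := fun x => x) in Hx
      by apply frn_id. rewrite map_id in Hx. right; exact Hx.
  - intros H. change [F] with ([] ++ [F]).
    eapply two_prem; [apply (r_impL F Bot G [] [F])|exact H|].
    eapply one_prem; [apply (r_botR F)|]. apply cp_ax. right. exists Bot.
    simpl; auto.
Qed.
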